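(* The infimum of $\operatorname{Rib}(\mathcal{U}_{w,F})$ over all folded ribbon $3$-stick unknots $\mathcal{U}_{w,F}$ (any non-degenerate triangle diagram $\mathcal{U}$, any width $w$, any folding information $F$) with ribbon linking number $\operatorname{Lk}(\mathcal{U}_{w,F})=\pm1$ equals $\sqrt{3}$, and this value is attained when $\mathcal{U}$ is an equilateral triangle.
   Context: A folded ribbon $3$-stick unknot corresponds to an unknot diagram $\mathcal{U}$ with three edges, here a non-degenerate triangle (non-collinear vertices). For width $w>0$, the corresponding folded ribbon $\mathcal{U}_{w,F}$ is a flat strip of width $w$ centred on $\mathcal{U}$ (boundary parallel to and at distance $w/2$ from each edge), folded at each vertex along a fold line through the vertex perpendicular to the bisector of the angle there; it is a piecewise-linear immersion of a Möbius band into the plane whose only singularities are the pairwise disjoint fold lines; the folding information $F$ records at each fold which of the two layers of ribbon lies on top. Folded ribbonlength: $\operatorname{Rib}(\mathcal{U}_{w,F})=\operatorname{Len}(\mathcal{U})/w$. The ribbon linking number $\operatorname{Lk}(\mathcal{U}_{w,F})$ (for an orientation of $\mathcal{U}$) is the linking number of the diagram with the boundary of the ribbon, i.e. one half the sum of the signs (right-hand rule) of the crossings between the diagram and the boundary curve. For such ribbons $\operatorname{Lk}\in\{\pm1,\pm3\}$. *)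

(* Defs.v *)
From HB Require Import structures.
From mathcomp Require Import all_boot all_order all_algebra.
Set Implicit Arguments. Unset Strict Implicit. Unset Printing Implicit Defensive.
Import Order.TTheory GRing.Theory Num.Theory.
Local Open Scope ring_scope.

Section Ribbon.
Variable R : rcfType.

Definition pt := (R * R)%type.
Definition vsub (x y : pt) : pt := (x.1 - y.1, x.2 - y.2).
Definition vadd (x y : pt) : pt := (x.1 + y.1, x.2 + y.2).
Definition vscale (c : R) (x : pt) : pt := (c * x.1, c * x.2).
Definition dot (u v : pt) : R := u.1 * v.1 + u.2 * v.2.
Definition cross (u v : pt) : R := u.1 * v.2 - u.2 * v.1.
Definition vnorm (u : pt) : R := Num.sqrt (dot u u).

(* A 3-stick unknot diagram: a triangle with vertices P 0, P 1, P 2,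
   oriented P 0 -> P 1 -> P 2 -> P 0.  Edge i goes from P i to P (i+1). *)
Definition nxt (i : 'I_3) : 'I_3 := ordS i.
Definition prv (i : 'I_3) : 'I_3 := ord_pred i.

Definition nondegenerate_triangle (P : 'I_3 -> pt) : Prop :=
  cross (vsub (P (nxt 0)) (P 0)) (vsub (P (prv 0)) (P 0)) != 0.

Definition equilateral_triangle (P : 'I_3 -> pt) : Prop :=
  forall i j : 'I_3, vnorm (vsub (P (nxt i)) (P i)) = vnorm (vsub (P (nxt j)) (P j)).

Definition len (P : 'I_3 -> pt) : R := \sum_(i < 3) vnorm (vsub (P (nxt i)) (P i)).

Definition rib (P : 'I_3 -> pt) (w : R) : R := len P / w.

Definition bisector (P : 'I_3 -> pt) (i : 'I_3) : pt :=
  let a := vsub (P (prv i)) (P i) in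
  let b := vsub (P (nxt i)) (P i) in
  vadd (vscale (vnorm a)^-1 a) (vscale (vnorm b)^-1 b).

Definition dist_line (v b x : pt) : R :=
  `|cross (vsub b v) (vsub x v)| / vnorm (vsub b v).

(* The fold line at vertex i, i.e. the part of the line through P i
   perpendicular to the bisector that lies in the (open) ribbon of width w,
   i.e. at distance < w/2 from the edge lines (a point of the line
   perpendicular to the bisector is equidistant from both edge lines). *)
Definition fold_line (P : 'I_3 -> pt) (w : R) (i : 'I_3) : pt -> Prop :=
  fun x => dot (vsub x (P i)) (bisector P i) = 0 /\
           dist_line (P i) (P (nxt i)) x < w / 2.

(* The folded ribbon U_{w,F} is well defined: the fold lines are pairwise
   disjoint. *)
Definition fold_lines_disjoint (P : 'I_3 -> pt) (w : R) : Prop :=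
  forall (i j : 'I_3) (x : pt), i != j -> fold_line P w i x -> fold_line P w j x -> False.

Definition folded_ribbon_3stick (P : 'I_3 -> pt) (w : R) : Prop :=
  [/\ nondegenerate_triangle P, 0 < w & fold_lines_disjoint P w].

(* Folding information: F i = true iff at the fold at vertex i the layer of
   the outgoing edge (edge i, from P i to P (i+1)) lies on top of the layer
   of the incoming edge (edge i-1). *)
Definition folding_info := 'I_3 -> bool.

(* Sign of a crossing, right-hand rule, given the directions of the over-
   and under-strands. *)
Definition crossing_sign (over under : pt) : R := Num.sg (cross over under).

(* The crossings between the diagram and the ribbon
   boundary occur at the folds, two at each fold: the boundary of the
   outgoing layer crosses the incoming edge, and the boundary of the incoming
   layer crosses the outgoing edge; boundary segments are oriented parallel
   to their edge. *)
Definition ribbon_Lk (P : 'I_3 -> pt) (F : folding_info) : R :=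
  2^-1 * \sum_(i < 3)
    (let din := vsub (P i) (P (prv i)) in
     let dout := vsub (P (nxt i)) (P i) in
     if F i then
       crossing_sign dout din (* boundary of outgoing layer over incoming edge *)
       + crossing_sign dout din (* outgoing edge over boundary of incoming layer *)
     else
       crossing_sign din dout (* incoming edge over boundary of outgoing layer *)
       + crossing_sign din dout (* boundary of incoming layer over outgoing edge *)).

End Ribbon.

(* Main.v *)
Require Import Defs.
From mathcomp Require Import all_boot all_order all_algebra ring lra.
Import Order.TTheory GRing.Theory Num.Theory.
Local Open Scope ring_scope.

Section S.
Variable R : rcfType.
Implicit Types A B C x u v a b : pt R.

Definition bis (v p n : pt R) : pt R :=
  vadd (vscale (vnorm (vsub p v))^-1 (vsub p v)) (vscale (vnorm (vsub n v))^-1 (vsub n v)).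

Definition exc A B C : pt R :=
  let l0 := vnorm (vsub B A) in let l1 := vnorm (vsub C B) in let l2 := vnorm (vsub A C) in
  vscale (l1 + l2 - l0)^-1 (vadd (vadd (vscale l1 A) (vscale l2 B)) (vscale (- l0) C)).

Lemma vnorm_sym x y : vnorm (vsub x y) = vnorm (vsub y x).
Proof. by rewrite /vnorm /dot /vsub /=; congr Num.sqrt; ring. Qed.

Lemma dot_ge0 u : 0 <= dot u u.
Proof. by rewrite /dot; apply: addr_ge0; rewrite -expr2 sqr_ge0. Qed.

Lemma vnorm_sq u : vnorm u ^+ 2 = dot u u.
Proof. by rewrite /vnorm sqr_sqrtr // dot_ge0. Qed.

Lemma dot_gt0 u v : cross u v != 0 -> 0 < dot u u.
Proof.
move=> H.
have E : cross u v ^+ 2 + dot u v ^+ 2 = dot u u * dot v v.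
  by rewrite /cross /dot; ring.
have H1 : 0 < cross u v ^+ 2 by rewrite exprn_even_gt0.
have H2 := dot_ge0 u; have H3 := dot_ge0 v.
rewrite lt_neqAle H2 andbT; apply/eqP => H0.
move: E; rewrite -H0 mul0r => E.
have : 0 <= dot u v ^+ 2 by apply: sqr_ge0.
lra.
Qed.

Lemma vnorm_gt0 u v : cross u v != 0 -> 0 < vnorm u.
Proof. by move=> H; rewrite /vnorm sqrtr_gt0; apply: dot_gt0 H. Qed.
Arguments vnorm_gt0 {u v}.

Lemma tri_ineq (l0 l1 l2 dd D : R) : 0 < l0 -> 0 < l1 -> 0 < l2 ->
  (l1 * l2) ^+ 2 = dd ^+ 2 + D ^+ 2 -> D != 0 ->
  l0 ^+ 2 = l1 ^+ 2 + l2 ^+ 2 + 2 * dd -> l0 < l1 + l2.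
Proof.
move=> h0 h1 h2 E HD E2.
have HD2 : 0 < D ^+ 2 by rewrite exprn_even_gt0.
have hp0 : 0 < l1 * l2 by rewrite mulr_gt0.
have hp : dd < l1 * l2.
  rewrite ltNge; apply/negP => h.
  have : (l1 * l2) ^+ 2 <= dd ^+ 2.
    by rewrite ler_sqr ?nnegrE //; [apply: ltW | apply: le_trans h; apply: ltW].
  lra.
have h3 : l0 ^+ 2 < (l1 + l2) ^+ 2.
  rewrite E2 sqrrD; lra.
move: h3; rewrite ltr_sqr ?nnegrE //; [apply: ltW | apply: addr_ge0; apply: ltW] => //.
Qed.

Arguments tri_ineq {l0 l1 l2 dd D}.

Lemma core A B C : cross (vsub B A) (vsub C A) != 0 ->
  let D := cross (vsub B A) (vsub C A) in
  let den := vnorm (vsub C B) + vnorm (vsub A C) - vnorm (vsub B A) in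
  [/\ 0 < den,
     dot (vsub (exc A B C) A) (bis A C B) = 0,
     dist_line A B (exc A B C) = `|D| / den,
     dot (vsub (exc A B C) B) (bis B A C) = 0 &
     dist_line B C (exc A B C) = `|D| / den].
Proof.
move=> HD D den; rewrite {}/D {}/den.
rewrite /bis (vnorm_sym C A) (vnorm_sym A B) /exc /dist_line.
have HD1 : cross (vsub C B) (vsub A C) != 0.
  suff -> : cross (vsub C B) (vsub A C) = cross (vsub B A) (vsub C A) by [].
  by rewrite /cross /vsub /=; ring.
have HD2 : cross (vsub A C) (vsub B A) != 0.
  suff -> : cross (vsub A C) (vsub B A) = cross (vsub B A) (vsub C A) by [].
  by rewrite /cross /vsub /=; ring.
have p0 := vnorm_gt0 HD; have p1 := vnorm_gt0 HD1; have p2 := vnorm_gt0 HD2.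
have s0 := vnorm_sq (vsub B A); have s1 := vnorm_sq (vsub C B); have s2 := vnorm_sq (vsub A C).
have E1 : (vnorm (vsub C B) * vnorm (vsub A C)) ^+ 2 =
   dot (vsub C B) (vsub A C) ^+ 2 + cross (vsub C B) (vsub A C) ^+ 2.
  by rewrite exprMn s1 s2 /dot /cross /vsub /=; ring.
have E2 : vnorm (vsub B A) ^+ 2 = vnorm (vsub C B) ^+ 2 + vnorm (vsub A C) ^+ 2
   + 2 * dot (vsub C B) (vsub A C).
  by rewrite s0 s1 s2 /dot /cross /vsub /=; ring.
have hden := tri_ineq p0 p1 p2 E1 HD1 E2.
have {hden} hden : 0 < vnorm (vsub C B) + vnorm (vsub A C) - vnorm (vsub B A) by lra.
move: p0 p1 p2 s0 s1 s2 hden.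
move: (vnorm (vsub B A)) (vnorm (vsub C B)) (vnorm (vsub A C)) => l0 l1 l2.
case: A B C {HD HD1 HD2 E1 E2} => [a1 a2] [b1 b2] [c1 c2].
move=> p0 p1 p2 s0 s1 s2 hden.
have n0 : l0 != 0 by rewrite gt_eqF.
have n1 : l1 != 0 by rewrite gt_eqF.
have n2 : l2 != 0 by rewrite gt_eqF.
have nd : l1 + l2 - l0 != 0 by rewrite gt_eqF.
split => //.
- rewrite (_ : dot _ _ = (l1 + l2 - l0)^-1 * (l2 / l0 * (dot (vsub (b1,b2) (a1,a2)) (vsub (b1,b2) (a1,a2)) - l0 ^+ 2)
     - l0 / l2 * (dot (vsub (a1,a2) (c1,c2)) (vsub (a1,a2) (c1,c2)) - l2 ^+ 2))).
    by rewrite -s0 -s2 !subrr !mulr0 subrr mulr0.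
  by rewrite /dot /vsub /vadd /vscale /=; field; by rewrite ?n0 ?n1 ?n2 ?nd.
- rewrite (_ : cross (vsub (b1,b2) (a1,a2)) _ = - (l0 * cross (vsub (b1,b2) (a1,a2)) (vsub (c1,c2) (a1,a2))) / (l1 + l2 - l0)).
    rewrite normrM normrN normrM normfV (gtr0_norm p0) (gtr0_norm hden); field; by rewrite ?n0 ?n1 ?n2 ?nd.
  by rewrite /cross /vsub /vadd /vscale /=; field; by rewrite ?n0 ?n1 ?n2 ?nd.
- rewrite (_ : dot _ _ = (l1 + l2 - l0)^-1 * (l1 / l0 * (dot (vsub (b1,b2) (a1,a2)) (vsub (b1,b2) (a1,a2)) - l0 ^+ 2)
     - l0 / l1 * (dot (vsub (c1,c2) (b1,b2)) (vsub (c1,c2) (b1,b2)) - l1 ^+ 2))).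
    by rewrite -s0 -s1 !subrr !mulr0 subrr mulr0.
  by rewrite /dot /vsub /vadd /vscale /=; field; by rewrite ?n0 ?n1 ?n2 ?nd.
- rewrite (_ : cross (vsub (c1,c2) (b1,b2)) _ = (l1 * cross (vsub (b1,b2) (a1,a2)) (vsub (c1,c2) (a1,a2))) / (l1 + l2 - l0)).
    rewrite normrM normrM normfV (gtr0_norm p1) (gtr0_norm hden); field; by rewrite ?n0 ?n1 ?n2 ?nd.
  by rewrite /cross /vsub /vadd /vscale /=; field; by rewrite ?n0 ?n1 ?n2 ?nd.
Qed.
Arguments core {A B C}.
Lemma vec_zero u a b : cross a b != 0 -> dot u a = 0 -> dot u b = 0 -> u = (0, 0).
Proof.
move=> H h1 h2.
have e1 : u.1 * cross a b = dot u a * b.2 - dot u b * a.2 by rewrite /dot /cross; ring.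
have e2 : u.2 * cross a b = dot u b * a.1 - dot u a * b.1 by rewrite /dot /cross; ring.
rewrite h1 h2 !mul0r subrr in e1 e2.
move/eqP: e1; rewrite mulf_eq0 (negbTE H) orbF => /eqP e1.
move/eqP: e2; rewrite mulf_eq0 (negbTE H) orbF => /eqP e2.
by case: u h1 h2 e1 e2 => /= u1 u2 _ _ -> ->.
Qed.

Arguments vec_zero {u a b}.
Lemma dot_sub x y z b : dot (vsub x y) b = dot (vsub x z) b - dot (vsub y z) b.
Proof. by rewrite /dot /vsub /=; ring. Qed.

Lemma cross_bis A B C : cross (vsub B A) (vsub C A) != 0 ->
  cross (bis A C B) (bis B A C) != 0.
Proof.
move=> HD.
rewrite /bis (vnorm_sym C A) (vnorm_sym A B).
have HD1 : cross (vsub C B) (vsub A C) != 0.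
  suff -> : cross (vsub C B) (vsub A C) = cross (vsub B A) (vsub C A) by [].
  by rewrite /cross /vsub /=; ring.
have HD2 : cross (vsub A C) (vsub B A) != 0.
  suff -> : cross (vsub A C) (vsub B A) = cross (vsub B A) (vsub C A) by [].
  by rewrite /cross /vsub /=; ring.
have p0 := vnorm_gt0 HD; have p1 := vnorm_gt0 HD1; have p2 := vnorm_gt0 HD2.
move: p0 p1 p2.
move: (vnorm (vsub B A)) (vnorm (vsub C B)) (vnorm (vsub A C)) => l0 l1 l2.
move=> p0 p1 p2.
have n0 : l0 != 0 by rewrite gt_eqF.
have n1 : l1 != 0 by rewrite gt_eqF.
have n2 : l2 != 0 by rewrite gt_eqF.
rewrite (_ : cross _ _ = cross (vsub B A) (vsub C A) * (l0 + l1 + l2) / (l0 * l1 * l2)).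
  apply: mulf_neq0; last by rewrite invr_eq0 !mulf_neq0.
  apply: mulf_neq0 => //; rewrite gt_eqF //; lra.
by case: A B C {HD HD1 HD2} => [a1 a2] [b1 b2] [c1 c2]; rewrite /cross /vsub /vadd /vscale /=; field; by rewrite ?n0 ?n1 ?n2 ?nd.
Qed.

Arguments cross_bis {A B C}.
Lemma uniq_pt A B C x : cross (vsub B A) (vsub C A) != 0 ->
  dot (vsub x A) (bis A C B) = 0 -> dot (vsub x B) (bis B A C) = 0 -> x = exc A B C.
Proof.
move=> HD h1 h2.
have [_ a _ c _] := core HD.
have := vec_zero (u := vsub x (exc A B C)) (cross_bis HD).
rewrite (dot_sub x _ A) (dot_sub x (exc A B C) B) h1 h2 a c subrr => /(_ erefl erefl).
clear h1 h2 a c.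
by case: x (exc A B C) => x1 x2 [y1 y2] [] /eqP; rewrite subr_eq0 => /eqP -> /eqP; rewrite subr_eq0 => /eqP ->.
Qed.
Arguments uniq_pt {A B C}.
Definition i0 : 'I_3 := 0.
Definition i1 : 'I_3 := nxt i0.
Definition i2 : 'I_3 := nxt i1.
Lemma nxt2 : nxt i2 = i0. Proof. by apply/val_inj. Qed.
Lemma prv0 : prv i0 = i2. Proof. by apply/val_inj. Qed.
Lemma prv1 : prv i1 = i0. Proof. by apply/val_inj. Qed.
Lemma prv2 : prv i2 = i1. Proof. by apply/val_inj. Qed.
Lemma I3E (k : 'I_3) : [\/ k = i0, k = i1 | k = i2].
Proof. case: k => [[|[|[|m]]] Hk].
- by apply: Or31; apply/val_inj.
- by apply: Or32; apply/val_inj.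
- by apply: Or33; apply/val_inj.
- by []. Qed.
Lemma lift1 : lift ord0 ord0 = i1 :> 'I_3. Proof. by apply/val_inj. Qed.
Lemma lift2 : lift ord0 (lift ord0 ord0) = i2 :> 'I_3. Proof. by apply/val_inj. Qed.
Lemma ord0E : ord0 = i0 :> 'I_3. Proof. by apply/val_inj. Qed.
Lemma prv_nxt k : prv (nxt k) = k.
Proof. by case: (I3E k) => ->; rewrite ?prv1 ?prv2 ?nxt2 ?prv0. Qed.
Lemma nxt_nxt k : nxt (nxt k) = prv k.
Proof. by case: (I3E k) => ->; rewrite ?prv1 ?prv2 ?nxt2 ?prv0. Qed.
Lemma nxt3 k : nxt (nxt (nxt k)) = k.
Proof. by case: (I3E k) => ->; rewrite ?nxt2. Qed.
Lemma adj (i j : 'I_3) : i != j -> j = nxt i \/ i = nxt j.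
Proof.
by case: (I3E i) => ->; case: (I3E j) => ->; rewrite ?eqxx // => _;
  first [by left | by right | by left; rewrite nxt2 | by right; rewrite nxt2].
Qed.

Definition DP (P : 'I_3 -> pt R) := cross (vsub (P i1) (P i0)) (vsub (P i2) (P i0)).
Definition L (P : 'I_3 -> pt R) k := vnorm (vsub (P (nxt k)) (P k)).
Definition denk P k := L P (nxt k) + L P (nxt (nxt k)) - L P k.

Lemma DP_rot P k : cross (vsub (P (nxt k)) (P k)) (vsub (P (nxt (nxt k))) (P k)) = DP P.
Proof.
rewrite /DP; case: (I3E k) => ->; rewrite -?[nxt i0]/i1 -?[nxt i1]/i2 ?nxt2 -?[nxt i0]/i1;
  rewrite /cross /vsub /=; ring.
Qed.

Lemma nondegE P : nondegenerate_triangle P -> DP P != 0.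
Proof. by rewrite /nondegenerate_triangle -[prv 0]/(prv i0) prv0. Qed.

Lemma core_k P k : DP P != 0 ->
  [/\ 0 < denk P k,
     dot (vsub (exc (P k) (P (nxt k)) (P (nxt (nxt k)))) (P k)) (bisector P k) = 0,
     dist_line (P k) (P (nxt k)) (exc (P k) (P (nxt k)) (P (nxt (nxt k)))) = `|DP P| / denk P k,
     dot (vsub (exc (P k) (P (nxt k)) (P (nxt (nxt k)))) (P (nxt k))) (bisector P (nxt k)) = 0 &
     dist_line (P (nxt k)) (P (nxt (nxt k))) (exc (P k) (P (nxt k)) (P (nxt (nxt k)))) = `|DP P| / denk P k].
Proof.
move=> HD; rewrite -(DP_rot P k) in HD *.
have := core HD.
have -> : denk P k = vnorm (vsub (P (nxt (nxt k))) (P (nxt k))) + vnorm (vsub (P k) (P (nxt (nxt k))))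
   - vnorm (vsub (P (nxt k)) (P k)).
  by rewrite /denk /L nxt3.
have E1 : bisector P k = bis (P k) (P (nxt (nxt k))) (P (nxt k)) by rewrite nxt_nxt.
have E2 : bisector P (nxt k) = bis (P (nxt k)) (P k) (P (nxt (nxt k))) by rewrite /bisector prv_nxt.
by rewrite E1 E2.
Qed.

Lemma pair_bound P w k : DP P != 0 -> fold_lines_disjoint P w ->
  0 < denk P k /\ w * denk P k <= 2 * `|DP P|.
Proof.
move=> HD Hdis; have [hd a b c d] := core_k P k HD; split => //.
have hk : k != nxt k by case: (I3E k) => ->; rewrite ?nxt2.
have H := Hdis k (nxt k) (exc (P k) (P (nxt k)) (P (nxt (nxt k)))) hk.
have : ~ (`|DP P| / denk P k < w / 2).
  by move=> hl; apply: H; split => //; rewrite ?b ?d.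
set t := `|DP P| / denk P k => hn.
have ht : `|DP P| = t * denk P k by rewrite /t divfK // gt_eqF.
rewrite ht; have : w / 2 <= t by rewrite leNgt; apply/negP.
nra.
Qed.

Lemma no_int P w k x : DP P != 0 -> w * denk P k <= 2 * `|DP P| ->
  fold_line P w k x -> fold_line P w (nxt k) x -> False.
Proof.
move=> HD hb [h1 h2] [h3 h4].
have [hd a b c d] := core_k P k HD.
have HD' : cross (vsub (P (nxt k)) (P k)) (vsub (P (nxt (nxt k))) (P k)) != 0 by rewrite DP_rot.
have ex := uniq_pt x HD'.
have E1 : bisector P k = bis (P k) (P (nxt (nxt k))) (P (nxt k)) by rewrite nxt_nxt.
have E2 : bisector P (nxt k) = bis (P (nxt k)) (P k) (P (nxt (nxt k))) by rewrite /bisector prv_nxt.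
rewrite E1 in h1; rewrite E2 in h3.
move: h2; rewrite (ex h1 h3) b.
set t := `|DP P| / denk P k => h2.
have ht : `|DP P| = t * denk P k by rewrite /t divfK // gt_eqF.
rewrite ht in hb.
nra.
Qed.

Arguments no_int {P w k x}.
Lemma disj_of_bound P w : DP P != 0 -> (forall k, w * denk P k <= 2 * `|DP P|) ->
  fold_lines_disjoint P w.
Proof.
move=> HD hb i j x /adj [->|->].
- exact: no_int HD (hb i).
- by move=> f1 f2; exact: (no_int HD (hb j) f2 f1).
Qed.

Lemma heron P : 4 * DP P ^+ 2 =
  (L P i0 + L P i1 + L P i2) * (L P i1 + L P i2 - L P i0) * (L P i2 + L P i0 - L P i1)
  * (L P i0 + L P i1 - L P i2).
Proof.
rewrite (_ : _ * _ * _ * _ = 2 * (L P i0 ^+ 2 * L P i1 ^+ 2 + L P i1 ^+ 2 * L P i2 ^+ 2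
   + L P i2 ^+ 2 * L P i0 ^+ 2) - ((L P i0 ^+ 2) ^+ 2 + (L P i1 ^+ 2) ^+ 2 + (L P i2 ^+ 2) ^+ 2)); last by ring.
rewrite /L !vnorm_sq nxt2 -[nxt i0]/i1 -[nxt i1]/i2 /DP /dot /cross /vsub /=; ring.
Qed.

Lemma len3 P : len P = L P i0 + L P i1 + L P i2.
Proof. by rewrite /len !big_ord_recl big_ord0 lift1 lift2 ord0E addr0 addrA. Qed.

Lemma max_case (S x y z w : R) : 0 < x -> 0 < y -> 0 < z -> y <= x -> z <= x ->
  S = x + y + z -> w ^+ 2 * x <= S * y * z -> 3 * w ^+ 2 <= S ^+ 2.
Proof.
move=> hx hy hz hyx hzx -> h.
have t0 : y * z <= x * x by apply: ler_pM; lra.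
have t1 : 3 * (y * z) <= (x + y + z) * x by nra.
have hS : 0 < x + y + z by lra.
have t2 : 3 * w ^+ 2 * x <= (x + y + z) ^+ 2 * x.
  have : (x + y + z) * (3 * (y * z)) <= (x + y + z) * ((x + y + z) * x) by rewrite ler_pM2l.
  nra.
by rewrite -(ler_pM2r hx).
Qed.

Lemma final_ineq (x y z w s : R) : 0 < x -> 0 < y -> 0 < z -> 0 < w -> 0 <= s ->
  w * x <= s -> w * y <= s -> w * z <= s -> s ^+ 2 = (x + y + z) * x * y * z ->
  3 * w ^+ 2 <= (x + y + z) ^+ 2.
Proof.
move=> hx hy hz hw hs h1 h2 h3 E.
have q1 : (w * x) ^+ 2 <= s ^+ 2 by rewrite ler_sqr ?nnegrE //; nra.
have q2 : (w * y) ^+ 2 <= s ^+ 2 by rewrite ler_sqr ?nnegrE //; nra.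
have q3 : (w * z) ^+ 2 <= s ^+ 2 by rewrite ler_sqr ?nnegrE //; nra.
rewrite E in q1 q2 q3.
have r1 : w ^+ 2 * x <= (x + y + z) * y * z.
  rewrite -(ler_pM2r hx); rewrite exprMn in q1; nra.
have r2 : w ^+ 2 * y <= (x + y + z) * x * z.
  rewrite -(ler_pM2r hy); rewrite exprMn in q2; nra.
have r3 : w ^+ 2 * z <= (x + y + z) * x * y.
  rewrite -(ler_pM2r hz); rewrite exprMn in q3; nra.
have hw2 : 0 < w ^+ 2 by rewrite exprn_gt0.
case: (lerP y x) => hyx; case: (lerP z x) => hzx; case: (lerP z y) => hzy.
all: try (exfalso; lra).
all: first [ by apply: (@max_case (x+y+z) x y z w) => //; lra
           | by apply: (@max_case (x+y+z) y x z w) => //; lra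
           | by apply: (@max_case (x+y+z) z x y w) => //; lra ].
Qed.
End S.
Arguments nondegE {R P}. Arguments DP {R}. Arguments L {R}. Arguments denk {R}.

Theorem corollary5p7 (R : rcfType) :
  (forall (P : 'I_3 -> pt R) (w : R) (F : folding_info),
     folded_ribbon_3stick P w ->
     (ribbon_Lk P F = 1 \/ ribbon_Lk P F = -1) ->
     Num.sqrt 3 <= rib P w)
  /\
  (forall P : 'I_3 -> pt R, nondegenerate_triangle P -> equilateral_triangle P ->
     exists (w : R) (F : folding_info),
       [/\ folded_ribbon_3stick P w,
           ribbon_Lk P F = 1 \/ ribbon_Lk P F = -1
         & rib P w = Num.sqrt 3]).
Proof.
have s3 : Num.sqrt (3 : R) ^+ 2 = 3 by rewrite sqr_sqrtr // ler0n.
have s3p : 0 < Num.sqrt (3 : R) by rewrite sqrtr_gt0 ltr0n.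
split.
- move=> P w F [/nondegE HD hw Hdis] _.
  have [d0 b0] := @pair_bound _ P w i0 HD Hdis.
  have [d1 b1] := @pair_bound _ P w i1 HD Hdis.
  have [d2 b2] := @pair_bound _ P w i2 HD Hdis.
  move: d0 b0 d1 b1 d2 b2; rewrite /denk -[nxt i0]/i1 -[nxt i1]/i2 !nxt2 -[nxt i0]/i1 => d0 b0 d1 b1 d2 b2.
  have H := heron _ P.
  have E : (2 * `|DP P|) ^+ 2 = (L P i1 + L P i2 - L P i0 + (L P i2 + L P i0 - L P i1) + (L P i0 + L P i1 - L P i2))
     * (L P i1 + L P i2 - L P i0) * (L P i2 + L P i0 - L P i1) * (L P i0 + L P i1 - L P i2).
    rewrite exprMn real_normK ?num_real // (_ : 2 ^+ 2 = 4) ?H; last by rewrite expr2; ring.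
    by congr (_ * _ * _ * _); ring.
  have hs : 0 <= 2 * `|DP P| by rewrite mulr_ge0 ?ler0n.
  have := @final_ineq _ _ _ _ _ _ d0 d1 d2 hw hs b0 b1 b2 E.
  rewrite /rib len3 ler_pdivlMr //.
  set S := (_ + _ + _) => h.
  have -> : L P i0 + L P i1 + L P i2 = S by rewrite /S; ring.
  have hS : 0 <= S by rewrite /S; lra.
  rewrite -ler_sqr ?nnegrE ?mulr_ge0 ?(ltW s3p) ?(ltW hw) // exprMn s3.
  done.
- move=> P HND Heq.
  have HD := nondegE HND.
  have hl : 0 < L P i0.
    apply: (@vnorm_gt0 _ _ (vsub (P i2) (P i0))); exact: HD.
  have e1 : L P i1 = L P i0 by apply: Heq.
  have e2 : L P i2 = L P i0 by apply: Heq.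
  exists (L P i0 * Num.sqrt 3), (fun i => i == i0).
  have H := heron _ P.
  rewrite e1 e2 in H.
  split.
  + split => //; first by rewrite mulr_gt0.
    apply: disj_of_bound => // k.
    have -> : denk P k = L P i0.
      rewrite /denk; case: (I3E k) => ->; rewrite -?[nxt i0]/i1 -?[nxt i1]/i2 ?nxt2 -?[nxt i0]/i1 ?e1 ?e2; ring.
    have hs : 0 <= 2 * `|DP P| by rewrite mulr_ge0 ?ler0n.
    rewrite -ler_sqr ?nnegrE ?mulr_ge0 ?(ltW s3p) ?(ltW hl) //.
    rewrite !exprMn real_normK ?num_real // s3.
    have -> : 2 ^+ 2 * DP P ^+ 2 = 4 * DP P ^+ 2 by rewrite expr2; ring.
    rewrite H le_eqVlt; apply/orP; left; apply/eqP; ring.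
  + rewrite /ribbon_Lk !big_ord_recl big_ord0 lift1 lift2 ord0E /=. 
    rewrite prv0 prv1 prv2 nxt2 -/i1 -/i2 /crossing_sign.
    have c0 : cross (vsub (P i1) (P i0)) (vsub (P i0) (P i2)) = - DP P.
      by rewrite /DP /cross /vsub /=; ring.
    have c1 : cross (vsub (P i1) (P i0)) (vsub (P i2) (P i1)) = DP P.
      by rewrite /DP /cross /vsub /=; ring.
    have c2 : cross (vsub (P i2) (P i1)) (vsub (P i0) (P i2)) = DP P.
      by rewrite /DP /cross /vsub /=; ring.
    rewrite c0 c1 c2 sgrN.
    have -> : forall s : R, 2^-1 * (- s + - s + (s + s + (s + s + 0))) = s.
      by move=> s; field.
    move: HD; rewrite neq_lt => /orP [h|h].
    * by right; rewrite ltr0_sg.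
    * by left; rewrite gtr0_sg.
  + rewrite /rib len3 e1 e2.
    rewrite (_ : L P i0 + L P i0 + L P i0 = Num.sqrt 3 ^+ 2 * L P i0); last by rewrite s3; ring.
    by field; rewrite ?(gt_eqF hl) ?(gt_eqF s3p).
Qed.
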